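(* Let $C\subseteq B_k^n$. Then $C$ is a linear code over $B_k$ (i.e. a $B_k$-submodule of $B_k^n$) if and only if there exist linear codes $C_1,\dots,C_{2^k}$ of length $n$ over $\mathbb{F}_{p^r}$ (i.e. $\mathbb{F}_{p^r}$-subspaces of $\mathbb{F}_{p^r}^n$) such that $C=\overline{\Psi}_k^{-1}(C_1,\dots,C_{2^k})$.
   Context: Let $p$ be a prime, $r\ge 1$, $\mathbb{F}_{p^r}$ the field with $p^r$ elements, and for $k\ge1$ let $B_k=\mathbb{F}_{p^r}[v_1,\dots,v_k]/\langle v_i^2-v_i,\ v_iv_j-v_jv_i\rangle$. For $H\subseteq\{1,\dots,k\}$ put $v_H=\prod_{i\in H}v_i$ ($v_\emptyset=1$); every $a\in B_k$ can be written uniquely as $a=\sum_{H\subseteq\{1,\dots,k\}}\alpha_Hv_H$ with $\alpha_H\in\mathbb{F}_{p^r}$. Fix an enumeration $H_1,\dots,H_{2^k}$ of the subsets of $\{1,\dots,k\}$ and define $\Psi_k:B_k\to\mathbb{F}_{p^r}^{2^k}$ by $\Psi_k(a)=\big(\sum_{H\subseteq H_1}\alpha_H,\ \sum_{H\subseteq H_2}\alpha_H,\dots,\sum_{H\subseteq H_{2^k}}\alpha_H\big)$ (a bijection). For $\mathbf a=(a_1,\dots,a_n)\in B_k^n$ let $\overline{\Psi}_k(\mathbf a)=(\Psi_k(a_1),\dots,\Psi_k(a_n))$. For subsets $C_1,\dots,C_{2^k}\subseteq\mathbb{F}_{p^r}^n$, $\overline{\Psi}_k^{-1}(C_1,\dots,C_{2^k})$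 denotes the set of all $\mathbf a=(a_1,\dots,a_n)\in B_k^n$ such that for every $j\in\{1,\dots,2^k\}$ the vector $\big(\Psi_k(a_1)_j,\dots,\Psi_k(a_n)_j\big)$ of $j$-th components lies in $C_j$. *)

(* Defs.v *)
From HB Require Import structures.
From mathcomp Require Import all_boot all_order all_algebra all_field.
Set Implicit Arguments. Unset Strict Implicit. Unset Printing Implicit Defensive.
Import GRing.Theory.
Local Open Scope ring_scope.

(* The ring B_k = F[v_1..v_k]/<v_i^2 - v_i, v_i v_j - v_j v_i>, represented by
   the (unique) coefficient family: a = \sum_H alpha_H v_H  <->  alpha : {ffun {set 'I_k} -> F}.
   Indices 1..k are represented by 'I_k. *)
Definition Bk (F : finFieldType) (k : nat) := {ffun {set 'I_k} -> F}.

Definition Badd (F : finFieldType) k (a b : Bk F k) : Bk F k := [ffun H => a H + b H].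

(* multiplication: v_H * v_G = v_(H :|: G) (since v_i^2 = v_i, commutative) *)
Definition Bmul (F : finFieldType) k (a b : Bk F k) : Bk F k :=
  [ffun S => \sum_(H : {set 'I_k}) \sum_(G : {set 'I_k} | H :|: G == S) a H * b G].

Definition Bzero (F : finFieldType) k : Bk F k := [ffun _ => 0].

Definition Bvec (F : finFieldType) k n := {ffun 'I_n -> Bk F k}.

Definition Bvec_zero (F : finFieldType) k n : Bvec F k n := [ffun _ => Bzero F k].
Definition Bvec_add (F : finFieldType) k n (x y : Bvec F k n) : Bvec F k n :=
  [ffun i => Badd (x i) (y i)].
Definition Bvec_scale (F : finFieldType) k n (a : Bk F k) (x : Bvec F k n) : Bvec F k n :=
  [ffun i => Bmul a (x i)].

Definition Bk_linear_code (F : finFieldType) k n (C : {set Bvec F k n}) : Prop :=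
  [/\ Bvec_zero F k n \in C,
      forall x y, x \in C -> y \in C -> Bvec_add x y \in C
    & forall (a : Bk F k) x, x \in C -> Bvec_scale a x \in C].

Definition Psi (F : finFieldType) k (a : Bk F k) (S : {set 'I_k}) : F :=
  \sum_(H : {set 'I_k} | H \subset S) a H.

Definition Psibar_comp (F : finFieldType) k n (x : Bvec F k n) (S : {set 'I_k}) : 'rV[F]_n :=
  \row_(i < n) Psi (x i) S.

(* \bar Psi_k^{-1}(C_1, ..., C_{2^k}) w.r.t. the enumeration e : j |-> H_j *)
Definition Psibar_inv (F : finFieldType) k n (e : 'I_(2 ^ k) -> {set 'I_k})
  (Cs : 'I_(2 ^ k) -> {vspace 'rV[F]_n}) : {set Bvec F k n} :=
  [set x | [forall j, Psibar_comp x (e j) \in Cs j]].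

(* Main.v *)
Require Import Defs.
From HB Require Import structures.
From mathcomp Require Import all_boot all_order all_algebra all_field.
Set Implicit Arguments. Unset Strict Implicit. Unset Printing Implicit Defensive.
Import GRing.Theory.
Local Open Scope ring_scope.

Section S.
Variables (F : finFieldType) (k : nat).
Implicit Types (a b : Bk F k) (S T : {set 'I_k}).

Lemma PsiD a b S : Psi (a + b) S = Psi a S + Psi b S.
Proof. by rewrite /Psi -big_split; apply: eq_bigr => H _; rewrite ffunE. Qed.
Lemma PsiN a S : Psi (- a) S = - Psi a S.
Proof. by rewrite /Psi -sumrN; apply: eq_bigr => H _; rewrite ffunE. Qed.
Lemma Psi0 S : Psi (0 : Bk F k) S = 0.
Proof. by rewrite /Psi big1 // => H _; rewrite ffunE. Qed.
Lemma PsiB a b S : Psi (a - b) S = Psi a S - Psi b S.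
Proof. by rewrite PsiD PsiN. Qed.
Lemma Psi_sum (I : Type) (r : seq I) (P : pred I) (f : I -> Bk F k) S :
  Psi (\sum_(i <- r | P i) f i) S = \sum_(i <- r | P i) Psi (f i) S.
Proof.
elim: r => [|x r IH]; first by rewrite !big_nil Psi0.
by rewrite !big_cons; case: (P x); rewrite ?PsiD IH.
Qed.

Lemma inner_sum (f : {set 'I_k} -> F) (H S : {set 'I_k}) :
  \sum_(T : {set 'I_k} | T \subset S) \sum_(G : {set 'I_k} | H :|: G == T) f G = \sum_(G | H :|: G \subset S) f G.
Proof.
rewrite (exchange_big_dep predT) //= [RHS]big_mkcond /=; apply: eq_bigr => G _.
case: ifP => HG.
  by rewrite (big_pred1 (H :|: G)) // => T /=; apply/andP/eqP => [[_ /eqP <-] // | ->]; rewrite HG eqxx.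
by rewrite big_pred0 // => T; apply/negbTE/andP => [[TS /eqP HGT]]; move: HG; rewrite HGT TS.
Qed.

Lemma PsiM a b S : Psi (Bmul a b) S = Psi a S * Psi b S.
Proof.
rewrite /Psi /Bmul.
under eq_bigr do rewrite ffunE.
rewrite exchange_big /=.
under eq_bigr do rewrite (inner_sum (fun G => a _ * b G)).
rewrite big_distrl /=.
under [RHS]eq_bigr do rewrite big_distrr /=.
rewrite [RHS]big_mkcond; apply: eq_bigr => H _.
rewrite [LHS]big_mkcond /=.
case: ifP => HS.
  by rewrite [RHS]big_mkcond; apply: eq_bigr => G _; rewrite subUset HS.
by rewrite big1 // => G _; rewrite subUset HS.
Qed.

Lemma Psi_mono (G : {set 'I_k}) (c : F) T :
  Psi ([ffun H => if H == G then c else 0] : Bk F k) T = if G \subset T then c else 0.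
Proof.
rewrite /Psi; under eq_bigr do rewrite ffunE; rewrite -big_mkcondr /=.
case: ifP => GT.
  by rewrite (big_pred1 G) // => H /=; apply/andP/eqP => [[_ /eqP]//|->]; rewrite GT eqxx.
by rewrite big_pred0 // => H; apply/negbTE/andP => [[HT /eqP HG]]; move: GT; rewrite -HG HT.
Qed.

Lemma Psi_inj a b : (forall S, Psi a S = Psi b S) -> a = b.
Proof.
move=> E; apply/eqP; rewrite -subr_eq0; apply/eqP.
have Ed S : Psi (a - b) S = 0 by rewrite PsiB E subrr.
move: Ed; set d := a - b => Ed.
suff h : forall m S, (#|S| < m)%N -> d S = 0.
  by apply/ffunP => S; move: (h _ S (ltnSn _)); rewrite /d !ffunE.
elim=> [|m IH] S0 //= hS.
have := Ed S0; rewrite /Psi (bigD1 S0) //= big1 ?addr0 // => H /andP [HS HN].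
apply: IH; have := proper_card (A := H) (B := S0).
rewrite properEneq HN HS => /(_ isT) h; exact: leq_trans h _.
Qed.

Definition one : Bk F k := [ffun H => if H == set0 then 1 else 0].
Definition vi (i : 'I_k) : Bk F k := [ffun H => if H == [set i] then 1 else 0].
Definition fac S i := if i \in S then vi i else one - vi i.
Definition eps S := foldr (fun i acc => Bmul (fac S i) acc) one (index_enum 'I_k).

Lemma Psi_one T : Psi one T = 1.
Proof. by rewrite Psi_mono sub0set. Qed.
Lemma Psi_fac S T i : Psi (fac S i) T = if i \in S then (i \in T)%:R else 1 - (i \in T)%:R.
Proof.
by rewrite /fac; case: ifP => _; rewrite ?PsiB ?Psi_one Psi_mono sub1set; case: (i \in T).
Qed.

Lemma Psi_eps S T : Psi (eps S) T = (S == T)%:R.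
Proof.
have -> : Psi (eps S) T = \prod_i Psi (fac S i) T.
  rewrite /eps; elim: (index_enum _) => [|x r IH]; first by rewrite big_nil Psi_one.
  by rewrite big_cons /= PsiM IH.
case: eqP => [<-|ST].
  by rewrite big1 // => i _; rewrite Psi_fac; case: ifP => ->; rewrite ?subr0.
have : ~~ [forall i, (i \in S) == (i \in T)].
  apply/negP => /fintype.forallP h; apply: ST; apply/setP => i; exact/eqP/h.
move=> /fintype.forallPn [i Hi]; apply/eqP/prodf_eq0; exists i => //.
rewrite Psi_fac; move: Hi; case: (i \in S); case: (i \in T) => //= _.
by rewrite subrr.
Qed.
End S.

Section V.
Variables (F : finFieldType) (k n : nat).
Implicit Types (x y : Bvec F k n) (S T : {set 'I_k}).

Definition cst (c : F) : Bk F k := [ffun H => if H == set0 then c else 0].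
Lemma Psi_cst c T : Psi (cst c) T = c.
Proof. by rewrite Psi_mono sub0set. Qed.

Lemma Bvec_addE x y : Bvec_add x y = x + y.
Proof. by apply/ffunP => i; rewrite !ffunE; apply/ffunP => H; rewrite !ffunE. Qed.
Lemma Bvec_zeroE : Bvec_zero F k n = 0.
Proof. by apply/ffunP => i; rewrite !ffunE; apply/ffunP => H; rewrite !ffunE. Qed.

Lemma Pc_add x y S : Psibar_comp (x + y) S = Psibar_comp x S + Psibar_comp y S.
Proof. by apply/rowP => i; rewrite !mxE ffunE PsiD. Qed.
Lemma Pc_zero S : Psibar_comp (0 : Bvec F k n) S = 0.
Proof. by apply/rowP => i; rewrite !mxE ffunE Psi0. Qed.
Lemma Pc_scale a x S : Psibar_comp (Bvec_scale a x) S = Psi a S *: Psibar_comp x S.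
Proof. by apply/rowP => i; rewrite !mxE ffunE PsiM. Qed.
Lemma Pc_sum (I : Type) (r : seq I) (P : pred I) (f : I -> Bvec F k n) S :
  Psibar_comp (\sum_(i <- r | P i) f i) S = \sum_(i <- r | P i) Psibar_comp (f i) S.
Proof.
elim: r => [|z r IH]; first by rewrite !big_nil Pc_zero.
by rewrite !big_cons; case: (P z); rewrite ?Pc_add IH.
Qed.

Lemma lin_sum (C : {set Bvec F k n}) (I : Type) (r : seq I) (P : pred I) (f : I -> Bvec F k n) :
  Bk_linear_code C -> (forall i, P i -> f i \in C) -> \sum_(i <- r | P i) f i \in C.
Proof.
move=> [C0 CD _] hf; elim: r => [|z r IH]; first by rewrite big_nil -Bvec_zeroE.
rewrite big_cons; case: ifP => Pz //; rewrite -Bvec_addE; exact: CD (hf _ Pz) IH.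
Qed.

Lemma span_pre (C : {set Bvec F k n}) S v : Bk_linear_code C ->
  v \in <<[seq Psibar_comp x S | x <- enum C]>>%VS ->
  exists2 x, x \in C & Psibar_comp x S = v.
Proof.
move=> hC; set s := [seq _ | _ <- _] => hv.
pose X := in_tuple s.
have := coord_span (X := X) hv => ->.
exists (\sum_(i < size s) Bvec_scale (cst (coord X i v)) (nth 0 (enum C) i)).
  apply: lin_sum => // i _; case: hC => _ _; apply.
  by rewrite -mem_enum mem_nth // -(size_map (fun x => Psibar_comp x S)).
rewrite Pc_sum; apply: eq_bigr => i _; rewrite Pc_scale Psi_cst; congr (_ *: _).
rewrite /= /s (nth_map 0) //.
by rewrite -(size_map (fun x => Psibar_comp x S)).
Qed.
End V.


Unset Implicit Arguments.
Theorem lemma4p4 (p r : nat) (F : finFieldType) (hp : prime p) (hr : (0 < r)%N)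
  (hF : #|F| = (p ^ r)%N) (k n : nat) (hk : (0 < k)%N)
  (e : 'I_(2 ^ k) -> {set 'I_k}) (he : bijective e)
  (C : {set Bvec F k n}) :
  Bk_linear_code C <->
  exists Cs : 'I_(2 ^ k) -> {vspace 'rV[F]_n}, C = Psibar_inv e Cs.
Proof.
split; last first.
  move=> [Cs ->]; split.
  - rewrite inE Bvec_zeroE; apply/forallP => j; by rewrite Pc_zero mem0v.
  - move=> x y; rewrite !inE Bvec_addE => /forallP hx /forallP hy.
    by apply/forallP => j; rewrite Pc_add memvD.
  - move=> a x; rewrite !inE => /forallP hx.
    by apply/forallP => j; rewrite Pc_scale memvZ.
move=> hC.
exists (fun j => <<[seq Psibar_comp x (e j) | x <- enum C]>>%VS).
apply/setP => y; rewrite inE; apply/idP/idP.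
  move=> yC; apply/forallP => j; apply: memv_span; apply: map_f.
  by rewrite mem_enum.
move=> /forallP hy.
have hx j : exists2 x, x \in C & Psibar_comp x (e j) = Psibar_comp y (e j).
  exact: span_pre (hy j).
pose xs j := odflt 0 [pick x in C | Psibar_comp x (e j) == Psibar_comp y (e j)].
have xsP j : xs j \in C /\ Psibar_comp (xs j) (e j) = Psibar_comp y (e j).
  rewrite /xs; case: pickP => [x /andP [xC /eqP ->] //|].
  by case: (hx j) => x xC hxe /(_ x); rewrite xC hxe eqxx.
have -> : y = \sum_j Bvec_scale (eps F (e j)) (xs j).
  apply/ffunP => i; rewrite sum_ffunE; apply: Psi_inj => T.
  case: he => einv ee1 ee2.
  rewrite Psi_sum (bigD1 (einv T)) //= big1 ?addr0.
    rewrite ffunE PsiM ee2 Psi_eps eqxx mul1r.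
    have := (xsP (einv T)).2; rewrite ee2 => /rowP /(_ i); rewrite !mxE => ->.
    done.
  move=> j hj; rewrite ffunE PsiM Psi_eps.
  case: eqP => [hjT|]; last by rewrite mul0r.
  by move: hj; rewrite -hjT ee1 eqxx.
apply: lin_sum => // j _; case: hC => _ _; apply; exact: (xsP j).1.
Qed.
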